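(* Consider the TVFJ dynamics described in the context, fix $\epsilon>0$, $w>0$, and integers $t_1<t_2<\dots<t_d$. Suppose that among the consecutive temporal graphs $\mathcal G_{t_1}^{t_2},\mathcal G_{t_2}^{t_3},\dots,\mathcal G_{t_{d-1}}^{t_d}$, exactly $\alpha$ are defected temporal graphs (with parameters $\epsilon,w$), and let $\delta_1,\dots,\delta_\alpha$ denote the lengths of these $\alpha$ defected subintervals. Then \[ \|\Phi(t_d,t_1)\|\le\prod_{a=1}^{\alpha}\bigl(1-\epsilon w^{\delta_a}\bigr). \]
   Context: There are $n$ agents $\mathcal V=\{\mathrm v_1,\dots,\mathrm v_n\}$ with opinions $\mathbf x[t]\in\mathbb R^n$ and a fixed innate opinion vector $\mathbf s\in[0,1]^n$, evolving by the TVFJ model $\mathbf x[t+1]=\Lambda[t]W[t]\mathbf x[t]+(I-\Lambda[t])\mathbf s$, where $W[t]$ is row-stochastic and $\Lambda[t]=\mathrm{diag}(\lambda_1[t],\dots,\lambda_n[t])$ with $\lambda_i[t]\in[0,1]$. Standing assumptions: (i) $\lambda_i[t]=0$ iff $w_{ij}[t]=0$ for all $j$; (ii) there is no $\tau$ with $\Lambda[\tau]=0$. The state transition matrix is $\Phi(t,\tau)=\Lambda[t-1]W[t-1]\cdots\Lambda[\tau]W[\tau]$ for $t>\tau$, $\Phi(\tau,\tau)=I$. Norm: $\|A\|:=\max_i\sum_j|a_{ij}|$. Graphs: $\mathcal G[t]$ has directed edge $(\mathrm v_j,\mathrm v_i)$ iff $w_{ij}[t]>0$; the temporal graph on $[t_a,t_b]$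 is $\mathcal G_{t_a}^{t_b}=\{\mathcal G[k]\}_{k=t_a}^{t_b}$. A temporal edge $(\mathrm v_j,\mathrm v_i,t)$ is a $w$-edge if $w_{ij}[t]\ge w$. A temporal path is a sequence of temporal edges $(\mathrm v_j,\mathrm v_{i_1},t_{k_0}),(\mathrm v_{i_1},\mathrm v_{i_2},t_{k_1}),\dots,(\mathrm v_{i_m},\mathrm v_i,t_{k_m})$ across successive time steps. Agent $\mathrm v_i$ is $\epsilon$-stubborn at time $t$ if $\lambda_i[t]\le1-\epsilon$. An influential path is a temporal path whose starting agent is $\epsilon$-stubborn and whose edges are all $w$-edges. $\mathcal G_{t_a}^{t_b}$ is a defected temporal graph (DTG) if there exists $k\in[t_a,t_b)$ such that, in layer $\mathcal G[k]$, every agent is either $\epsilon$-stubborn or connected to an $\epsilon$-stubborn agent via a finite influential path entirely contained in $[t_a,t_b)$. *)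

(* Defs.v *)
From mathcomp Require Import all_boot all_order all_algebra.
Set Implicit Arguments. Unset Strict Implicit. Unset Printing Implicit Defensive.
Import Order.TTheory GRing.Theory Num.Theory.
Local Open Scope ring_scope.

Section TVFJ.
Variables (R : realFieldType) (n : nat).
Variables (W : nat -> 'M[R]_n) (lam : nat -> 'I_n -> R).

Definition Lambda (t : nat) : 'M[R]_n := diag_mx (\row_i lam t i).

(* PhiAux m tau = Phi(tau + m, tau) *)
Fixpoint PhiAux (m tau : nat) : 'M[R]_n :=
  match m with
  | 0 => 1%:M
  | m'.+1 => (Lambda (tau + m') *m W (tau + m')) *m PhiAux m' tau
  end.

(* State transition matrix Phi(t, tau) = Lambda[t-1]W[t-1]...Lambda[tau]W[tau]
   (t > tau), Phi(tau, tau) = I; only meaningful for tau <= t. *)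
Definition Phi (t tau : nat) : 'M[R]_n := PhiAux (t - tau) tau.

Definition eps_stubborn (eps : R) (i : 'I_n) (t : nat) : Prop := lam t i <= 1 - eps.

Definition w_edge (w : R) (j i : 'I_n) (t : nat) : Prop := w <= W t i j.

(* The temporal path (j, p_0, t0), (p_0, p_1, t0+1), ..., (p_{m-1}, p_m, t0+m)
   with starting agent j, first edge at time t0, edges at successive time
   steps, all edges being w-edges. *)
Definition w_temporal_path (w : R) (t0 : nat) (j : 'I_n) (p : seq 'I_n) : Prop :=
  forall l, (l < size p)%N -> w_edge w (nth j (j :: p) l) (nth j p l) (t0 + l).

(* Influential path: starting agent epsilon-stubborn (at the step t0-1 that
   produces the state x_j[t0] carried by the first edge), all edges w-edges. *)
Definition influential_path (eps w : R) (t0 : nat) (j : 'I_n) (p : seq 'I_n) : Prop :=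
  eps_stubborn eps j t0.-1 /\ w_temporal_path w t0 j p.

Definition DTG (eps w : R) (ta tb : nat) : Prop :=
  exists k : nat, (ta <= k < tb)%N /\
    forall i : 'I_n,
      eps_stubborn eps i k \/
      exists (j : 'I_n) (t0 : nat) (p : seq 'I_n),
        [/\ p != [::], last j p = i,
            (ta < t0)%N (* stubbornness time t0-1 >= ta *),
            (t0 + (size p).-1)%N = k (* path ends in layer G[k] *)
          & influential_path eps w t0 j p].

End TVFJ.

Definition mxnorm (R : realFieldType) (n : nat) (A : 'M[R]_n) : R :=
  \big[Num.max/0]_(i < n) \sum_(j < n) `|A i j|.

(* Main.v *)
Require Import Defs.
From mathcomp Require Import all_boot all_order all_algebra.
From mathcomp Require Import ring lra zify.
Import Order.TTheory GRing.Theory Num.Theory.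
Local Open Scope ring_scope.

Theorem lemma2 (R : realFieldType) (n : nat)
    (W : nat -> 'M[R]_n) (lam : nat -> 'I_n -> R)
    (eps w : R) (d : nat) (t : nat -> nat) (isDTG : nat -> bool) :
  (0 < n)%N ->
  (* W[t] row-stochastic *)
  (forall k (i j : 'I_n), 0 <= W k i j) ->
  (forall k (i : 'I_n), \sum_(j < n) W k i j = 1) ->
  (* lambda_i[t] in [0,1] *)
  (forall k (i : 'I_n), 0 <= lam k i <= 1) ->
  (* standing assumption (i) *)
  (forall k (i : 'I_n), lam k i = 0 <-> (forall j : 'I_n, W k i j = 0)) ->
  (* standing assumption (ii): no tau with Lambda[tau] = 0 *)
  ~ (exists tau, Lambda lam tau = 0) ->
  0 < eps -> 0 < w -> w <= 1 ->
  (0 < d)%N ->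
  (* t_1 < t_2 < ... < t_d *)
  (forall a, (1 <= a < d)%N -> (t a < t a.+1)%N) ->
  (* isDTG a marks exactly the subintervals G_{t_a}^{t_(a+1)} that are DTGs *)
  (forall a, (1 <= a < d)%N -> (isDTG a <-> DTG W lam eps w (t a) (t a.+1))) ->
  mxnorm (Phi W lam (t d) (t 1%N)) <=
    \prod_(1 <= a < d | isDTG a)
       (1 - eps * w ^+ (t a.+1 - t a)).
Proof.
move=> n0 W0 W1 L01 _ _ e0 w0 w1 d0 tinc hD.
set tau := t 1%N.
pose S (s : nat) (i : 'I_n) := \sum_(j < n) Phi W lam s tau i j.
have Lam (s : nat) i k : (Lambda lam s *m W s) i k = lam s i * W s i k.
  by rewrite /Lambda mul_diag_mx mxE mxE.
have F1 s i : (tau <= s)%N -> S s.+1 i = lam s i * \sum_(k < n) W s i k * S s k.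
  move=> hs; rewrite /S /Phi subSn //= subnKC //.
  under eq_bigr do rewrite mxE.
  rewrite exchange_big /= mulr_sumr; apply: eq_bigr => k _.
  by rewrite Lam mulrA mulr_sumr.
have F0 i : S tau i = 1.
  rewrite /S /Phi subnn /= (bigD1 i) //= mxE eqxx big1 ?addr0 // => j /negPf.
  by rewrite mxE eq_sym => ->.
have S0 s i : (tau <= s)%N -> 0 <= S s i.
  elim: s i => [|s IH] i hs.
    by move: hs; rewrite leqn0 => /eqP <-; rewrite F0.
  case: (ltngtP tau s.+1) hs => // h _.
    rewrite F1 //; apply: mulr_ge0; first by case/andP: (L01 s i).
    by apply: sumr_ge0 => k _; apply: mulr_ge0 => //; apply: IH.
  by rewrite -h F0.
have step s c : (tau <= s)%N -> (forall k, S s k <= c) ->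
    forall i, S s.+1 i <= lam s i * c.
  move=> hs hc i; rewrite F1 //; apply: ler_wpM2l; first by case/andP: (L01 s i).
  apply: le_trans (_ : \sum_(k < n) W s i k * c <= _).
    by apply: ler_sum => k _; apply: ler_wpM2l.
  by rewrite -mulr_suml W1 mul1r.
have c0 s c : (tau <= s)%N -> (forall k, S s k <= c) -> 0 <= c.
  by move=> hs hc; apply: le_trans (hc (Ordinal n0)); apply: S0.
have mono s c : (tau <= s)%N -> (forall k, S s k <= c) ->
    forall s', (s <= s')%N -> forall k, S s' k <= c.
  move=> hs hc s'; elim: s' => [|s' IH] hs'.
    by move: hs'; rewrite leqn0 => /eqP <-.
  case: (ltngtP s s'.+1) hs' => // h _; last by rewrite -h.
  rewrite ltnS in h; have hc' := IH h.
  have hs' : (tau <= s')%N by apply: leq_trans hs h.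
  move=> k; apply: le_trans (step _ _ hs' hc' k) _.
  rewrite -[leRHS]mul1r; apply: ler_wpM2r; first exact: (c0 s' c hs' hc').
  by case/andP: (L01 s' k).
have dtg ta tb c : (tau <= ta)%N -> (ta < tb)%N -> DTG W lam eps w ta tb ->
    (forall k, S ta k <= c) -> forall i, S tb i <= c * (1 - eps * w ^+ (tb - ta)).
  move=> hta hab [k [/andP [hk1 hk2] hk]] hc.
  have cc := c0 _ _ hta hc.
  have hx1 : w ^+ (tb - ta) <= 1 by apply: exprn_ile1; [apply: ltW|].
  have hx0 : 0 <= w ^+ (tb - ta) by apply: exprn_ge0; apply: ltW.
  have hkt : (tau <= k)%N by apply: leq_trans hk1.
  have hbk := mono ta c hta hc k hk1.
  suff hK : forall i, S k.+1 i <= c * (1 - eps * w ^+ (tb - ta)).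
    by apply: (mono k.+1) => //; apply: leq_trans hkt _.
  move=> i; case: (hk i) => [hst | [j [t0 [p [pn0 plast ht0 hkend [hjst hpath]]]]]].
    apply: le_trans (step k c hkt hbk i) _; rewrite mulrC; apply: ler_wpM2l => //.
    rewrite /eps_stubborn in hst; apply: le_trans hst _; nra.
  have claim : forall l, (l <= size p)%N ->
      S (t0 + l)%N (nth j (j :: p) l) <= c * (1 - eps * w ^+ l).
    elim=> [|l IH] hl.
      rewrite addn0 /=.
      have ht : t0 = (t0.-1).+1 by rewrite prednK //; apply: leq_ltn_trans ht0.
      have hta' : (ta <= t0.-1)%N by rewrite -ltnS -ht.
      have htau' : (tau <= t0.-1)%N by apply: leq_trans hta'.
      rewrite ht; apply: le_trans (step _ c htau' (mono ta c hta hc _ hta') j) _.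
      rewrite expr0 mulr1 mulrC; apply: ler_wpM2l => //.
    have hl' : (l < size p)%N by [].
    have IH' := IH (ltnW hl').
    have hs : (tau <= t0 + l)%N.
      by apply: leq_trans hta _; apply: leq_trans (ltnW ht0) (leq_addr _ _).
    have hb := mono ta c hta hc (t0 + l)%N (leq_trans (ltnW ht0) (leq_addr _ _)).
    have he := hpath l hl'; rewrite /w_edge in he.
    set u := nth j (j :: p) l in IH' he *.
    rewrite /= -/(nth j p l); set v := nth j p l in he *.
    rewrite addnS F1 //.
    set X := \sum_(k0 < n) _.
    have X0 : 0 <= X by apply: sumr_ge0 => k0 _; apply: mulr_ge0 => //; apply: S0.
    have hX : X = c - \sum_(k0 < n) W (t0 + l)%N v k0 * (c - S (t0 + l)%N k0).
      rewrite /X; under [in RHS]eq_bigr do rewrite mulrBr.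
      by rewrite sumrB -mulr_suml W1 mul1r opprB addrCA subrr addr0.
    have hY : W (t0 + l)%N v u * (c - S (t0 + l)%N u) <=
        \sum_(k0 < n) W (t0 + l)%N v k0 * (c - S (t0 + l)%N k0).
      rewrite (bigD1 u) //= lerDl; apply: sumr_ge0 => k0 _; apply: mulr_ge0 => //.
      by rewrite subr_ge0.
    have hcu : c * eps * w ^+ l <= c - S (t0 + l)%N u by lra.
    have hwl : 0 <= c * eps * w ^+ l.
      by apply: mulr_ge0; [apply: mulr_ge0 => //; apply: ltW|apply: exprn_ge0; apply: ltW].
    have hW : w * (c * eps * w ^+ l) <= W (t0 + l)%N v u * (c - S (t0 + l)%N u).
      by apply: ler_pM => //; apply: ltW.
    have hlam : lam (t0 + l)%N v * X <= X.
      by rewrite -[leRHS]mul1r; apply: ler_wpM2r => //; case/andP: (L01 (t0 + l)%N v).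
    rewrite exprS; apply: le_trans hlam _; rewrite hX.
    have -> : c * (1 - eps * (w * w ^+ l)) = c - w * (c * eps * w ^+ l) by ring.
    by rewrite lerD2l lerN2; apply: le_trans hY.
  have hsz : (t0 + size p)%N = k.+1.
    by rewrite -hkend; case: (p) pn0 => // ? ? _; rewrite /= addnS.
  have := claim (size p) (leqnn _).
  have -> : nth j (j :: p) (size p) = i.
    by rewrite -plast; move: (nth_last j (j :: p)) => /= ->.
  rewrite hsz => h1; apply: le_trans h1 _; apply: ler_wpM2l => //.
  rewrite lerD2l lerN2; apply: ler_wpM2l; first exact: ltW.
  apply: ler_wiXn2l; [exact: ltW|exact: w1|].
  have : (size p <= k.+1 - t0)%N by rewrite -hsz addKn.
  move=> h2; apply: leq_trans h2 _; lia.
pose P a := \prod_(1 <= b < a | isDTG b) (1 - eps * w ^+ (t b.+1 - t b)).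
have main : forall a, (1 <= a <= d)%N -> (tau <= t a)%N /\ forall i, S (t a) i <= P a.
  elim=> [|a IH] ha //; case: a IH ha => [|a] IH ha.
    by split => // i; rewrite F0 /P big_geq.
  have ha' : (1 <= a.+1 <= d)%N by move: ha => /andP [_ h]; apply/andP; split => //; apply: ltnW.
  have [hta hb] := IH ha'.
  have hlt : (1 <= a.+1 < d)%N by [].
  have htt := tinc _ hlt.
  have htau : (tau <= t a.+2)%N by apply: leq_trans hta (ltnW htt).
  split => // i.
  rewrite /P big_mkcond big_nat_recr //= -big_mkcond -/(P a.+1).
  case hd: (isDTG a.+1).
    by apply: dtg hta htt _ hb i; apply/(hD _ hlt).
  by rewrite mulr1; apply: (mono (t a.+1)) => //; apply: ltnW.
have P0 m i j : 0 <= PhiAux W lam m tau i j.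
  elim: m i j => [|m IH] i j /=; first by rewrite mxE ler0n.
  rewrite mxE; apply: sumr_ge0 => k _; rewrite Lam; apply: mulr_ge0 => //.
  by apply: mulr_ge0 => //; case/andP: (L01 (tau + m)%N i).
have [htd hbd] := main d (andb_true_intro (conj d0 (leqnn d))).
rewrite /mxnorm; apply: bigmax_le => [|i _]; first exact: (c0 _ _ htd hbd).
apply: le_trans (hbd i); rewrite /S le_eqVlt; apply/orP; left; apply/eqP.
by apply: eq_bigr => j _; rewrite ger0_norm // /Phi.
Qed.
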